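(* For real $u\ge3$, $$P_3(u)=\tfrac12\mathrm{Li}_3\!\left(\frac{1}{u(2-u)}\right)-\mathrm{Li}_3\!\left(\frac1u\right)-\mathrm{Li}_3\!\left(\frac{1}{2-u}\right)+\mathrm{Li}_2\!\left(\frac1u\right)\log(u-2)+\tfrac13\zeta_3-\tfrac12\zeta_2\log(u)+\tfrac1{12}\log^3\!\big(u(u-2)\big)-\tfrac12\log^2(u-2)\log(u).$$
   Context: The functions $P_k$ are defined by $P_0(u)=1$ for $u\ge 0$, and for integers $k\ge1$, $P_k:[k,\infty)\to\mathbb{R}$ is the function with $P_k(k)=0$ and $uP_k'(u)=P_{k-1}(u-1)$ for $u\ge k$. Here $\mathrm{Li}_k(z)=\sum_{n\ge1}z^n/n^k$ for $|z|\le1$ and $\zeta_k=\mathrm{Li}_k(1)$. *)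

(* Defs.v *)
From Stdlib Require Import Reals.
From Coquelicot Require Import Coquelicot.
Open Scope R_scope.

Definition Li (k : nat) (z : R) : R :=
  Series (fun n : nat => z ^ (S n) / (INR (S n)) ^ k).

Definition zeta (k : nat) : R := Li k 1.

(* P_0 = 1;  P_k(u) = int_k^u P_{k-1}(t-1)/t dt, i.e. the unique function on
   [k,oo) with P_k(k) = 0 and u P_k'(u) = P_{k-1}(u-1). *)
Fixpoint P (k : nat) (u : R) : R :=
  match k with
  | O => 1
  | S j => RInt (fun t => P j (t - 1) / t) (INR (S j)) u
  end.

(* Main.v *)
Require Import Defs.
From Stdlib Require Import Reals Lra Lia.
From Coquelicot Require Import Coquelicot.
Open Scope R_scope.

Ltac mm H := revert H; unfold Rmin, Rmax; repeat (destruct Rle_dec); intro H.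

Definition ak (k n : nat) : R := / (INR (S n)) ^ k.

Lemma INRS_pos n : 0 < INR (S n).
Proof. apply lt_0_INR; lia. Qed.

Lemma Li_PS k z : Li k z = z * PSeries (ak k) z.
Proof.
  unfold Li, PSeries. rewrite <- Series_scal_l. apply Series_ext; intro n.
  unfold ak. simpl. field. apply pow_nonzero. apply Rgt_not_eq, INRS_pos.
Qed.

Lemma Li_PS1 k z : Li k z = PSeries (PS_incr_1 (ak k)) z.
Proof. rewrite PSeries_incr_1. apply Li_PS. Qed.

Lemma ak_le1 k n : 0 < ak k n <= 1.
Proof.
  unfold ak. split.
  - apply Rinv_0_lt_compat, pow_lt, INRS_pos.
  - rewrite <- Rinv_1. apply Rinv_le_contravar; [lra|].
    rewrite <- (pow1 k). apply pow_incr. split; [lra|].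
    rewrite S_INR. pose proof (pos_INR n). lra.
Qed.

Lemma rad_ak k z : Rabs z < 1 -> Rbar_lt (Rabs z) (CV_radius (ak k)).
Proof.
  intro Hz. set (r := (Rabs z + 1)/2).
  assert (Hr : CV_disk (ak k) r).
  { unfold CV_disk. apply (@ex_series_le R_AbsRing R_CompleteNormedModule) with (b := fun n => r ^ n).
    - intro n. change (Rabs (Rabs (ak k n * r ^ n)) <= r ^ n).
      rewrite Rabs_Rabsolu, Rabs_mult. rewrite <- RPow_abs.
      assert (0 <= r) by (unfold r; pose proof (Rabs_pos z); lra).
      rewrite (Rabs_pos_eq r) by lra.
      pose proof (ak_le1 k n). rewrite Rabs_pos_eq by lra.
      rewrite <- (Rmult_1_l (r^n)) at 2. apply Rmult_le_compat_r; [apply pow_le; lra| lra].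
    - apply ex_series_geom. unfold r. pose proof (Rabs_pos z).
      rewrite Rabs_pos_eq; lra. }
  assert (Hle : Rbar_le r (CV_radius (ak k))).
  { unfold CV_radius. destruct (Lub_Rbar_correct (CV_disk (ak k))) as [Hub _]. apply Hub. exact Hr. }
  destruct (CV_radius (ak k)) as [c| |]; simpl in *; try tauto.
  unfold r in Hle. lra.
Qed.

Lemma Li_derive k z : Rabs z < 1 -> is_derive (Li (S k)) z (PSeries (ak k) z).
Proof.
  intro Hz.
  apply is_derive_ext with (f := PSeries (PS_incr_1 (ak (S k)))).
  { intro t. symmetry. apply Li_PS1. }
  replace (PSeries (ak k) z) with (PSeries (PS_derive (PS_incr_1 (ak (S k)))) z).
  - apply is_derive_PSeries. rewrite CV_radius_incr_1. apply rad_ak; auto.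
  - apply PSeries_ext. intro n. unfold PS_derive, PS_incr_1, ak. simpl.
    field. split; [apply pow_nonzero|]; apply Rgt_not_eq, INRS_pos.
Qed.

Lemma PS_Li k z : z <> 0 -> PSeries (ak k) z = Li k z / z.
Proof. intro. rewrite Li_PS. field. auto. Qed.

Lemma const_eq (f : R -> R) a b :
  (forall x, Rmin a b < x < Rmax a b -> is_derive f x 0) ->
  (forall x, Rmin a b <= x <= Rmax a b -> continuity_pt f x) -> f b = f a.
Proof.
  intros Hd Hc. destruct (MVT_gen f a b (fun _ => 0) Hd Hc) as [c [_ Hc']]. lra.
Qed.

Lemma ex_derive_cpt (f : R -> R) x : ex_derive f x -> continuity_pt f x.
Proof.
  intro H. apply continuity_pt_filterlim.
  exact (ex_derive_continuous (K:=R_AbsRing) (V:=R_NormedModule) f x H).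
Qed.

Lemma PS_ak0 z : Rabs z < 1 -> PSeries (ak 0) z = / (1 - z).
Proof.
  intro Hz. unfold PSeries. apply is_series_unique.
  eapply is_series_ext; [|apply is_series_geom; auto].
  intro n. unfold ak. simpl. rewrite Rinv_1. ring.
Qed.

Lemma Li_0 k : Li k 0 = 0.
Proof. rewrite Li_PS. ring. Qed.

Lemma Li1 z : Rabs z < 1 -> Li 1 z = - ln (1 - z).
Proof.
  intro Hz.
  assert (H : (fun t => Li 1 t + ln (1 - t)) z = (fun t => Li 1 t + ln (1 - t)) 0).
  { apply (const_eq (fun t => Li 1 t + ln (1 - t)) 0 z).
    - intros x Hx. assert (Hx' : Rabs x < 1).
      { apply Rabs_def2 in Hz; apply Rabs_def1; mm Hx; lra. }
      assert (Hx1 : 0 < 1 - x) by (apply Rabs_def2 in Hx'; lra).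
      replace 0 with (PSeries (ak 0) x + (-1) / (1 - x)).
      + apply (is_derive_plus (K:=R_AbsRing) (V:=R_NormedModule)).
        * apply Li_derive; auto.
        * auto_derive; [lra|]. field. lra.
      + rewrite PS_ak0; auto. field. lra.
    - intros x Hx. assert (Hx' : Rabs x < 1).
      { apply Rabs_def2 in Hz; apply Rabs_def1; mm Hx; lra. }
      assert (Hx1 : 0 < 1 - x) by (apply Rabs_def2 in Hx'; lra).
      apply ex_derive_cpt.
      apply (ex_derive_plus (K:=R_AbsRing) (V:=R_NormedModule)).
      + eexists; apply Li_derive; auto.
      + auto_derive. lra. }
  simpl in H. rewrite Li_0, Rminus_0_r, ln_1 in H. lra.
Qed.

Lemma tele_sum n : sum_f_R0 (fun k => / INR (S k) - / INR (S (S k))) n = 1 - / INR (S (S n)).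
Proof.
  induction n.
  - simpl. field. 
  - rewrite tech5, IHn. ring.
Qed.

Lemma ex_series_tele : ex_series (fun k => / INR (S k) - / INR (S (S k))).
Proof.
  exists 1. apply is_series_Reals. intros eps Heps.
  assert (H : is_lim_seq (fun n => 1 - / INR (S (S n))) 1).
  { assert (H0 : is_lim_seq (fun n => / INR (S (S n))) 0).
    { apply (is_lim_seq_incr_1 (fun n => / INR (S n))).
      apply (is_lim_seq_incr_1 (fun n => / INR n)).
      replace (Finite 0) with (Rbar_inv p_infty) by reflexivity.
      apply is_lim_seq_inv. apply is_lim_seq_INR. discriminate. }
    pose proof (is_lim_seq_minus' _ _ 1 0 (is_lim_seq_const 1) H0) as H1.
    rewrite Rminus_0_r in H1. exact H1. }
  apply is_lim_seq_Reals in H. destruct (H eps Heps) as [N HN].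
  exists N. intros n Hn. rewrite tele_sum. apply HN. exact Hn.
Qed.

Lemma sq_le n : / INR (S n) ^ 2 <= 2 * (/ INR (S n) - / INR (S (S n))).
Proof.
  rewrite (S_INR (S n)). pose proof (INRS_pos n). set (m := INR (S n)) in *.
  replace (2 * (/ m - / (m + 1)) - / m ^ 2) with ((m - 1) / (m^2 * (m+1))) 
    by (field; lra) || idtac.
  assert (1 <= m) by (unfold m; rewrite S_INR; pose proof (pos_INR n); lra).
  assert (0 <= (m - 1) / (m^2 * (m+1))).
  { apply Rdiv_le_0_compat; [lra|]. apply Rmult_lt_0_compat; [apply pow_lt|]; lra. }
  assert (E : 2 * (/ m - / (m + 1)) - / m ^ 2 = (m - 1) / (m^2 * (m+1))) by (field; lra).
  lra.
Qed.

Lemma ex_series_sq : ex_series (fun n => / INR (S n) ^ 2).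
Proof.
  apply (@ex_series_le R_AbsRing R_CompleteNormedModule) with (b := fun n => 2 * (/ INR (S n) - / INR (S (S n)))).
  - intro n. change (Rabs (/ INR (S n) ^ 2) <= 2 * (/ INR (S n) - / INR (S (S n)))).
    rewrite Rabs_pos_eq. apply sq_le. apply Rlt_le, Rinv_0_lt_compat, pow_lt, INRS_pos.
  - apply (ex_series_scal_l (K:=R_AbsRing) (V:=R_NormedModule)). apply ex_series_tele.
Qed.

Lemma term_bound k n z : (2 <= k)%nat -> Rabs z <= 1 -> Rabs (z ^ S n / INR (S n) ^ k) <= / INR (S n) ^ 2.
Proof.
  intros Hk Hz. unfold Rdiv. rewrite Rabs_mult, <- RPow_abs.
  pose proof (INRS_pos n).
  rewrite (Rabs_pos_eq (/ INR (S n) ^ k)) by (apply Rlt_le, Rinv_0_lt_compat, pow_lt; lra).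
  assert (1 <= INR (S n)) by (rewrite S_INR; pose proof (pos_INR n); lra).
  rewrite <- (Rmult_1_l (/ INR (S n) ^ 2)).
  apply Rmult_le_compat.
  - apply pow_le, Rabs_pos.
  - apply Rlt_le, Rinv_0_lt_compat, pow_lt; lra.
  - rewrite <- (pow1 (S n)). apply pow_incr. split; [apply Rabs_pos| auto].
  - apply Rinv_le_contravar; [apply pow_lt; lra|].
    replace k with (2 + (k - 2))%nat by lia. rewrite pow_add.
    rewrite <- (Rmult_1_r (INR (S n) ^ 2)) at 1. apply Rmult_le_compat_l; [apply pow_le; lra|].
    rewrite <- (pow1 (k-2)). apply pow_incr. lra.
Qed.

Lemma ex_series_Li k z : (2 <= k)%nat -> Rabs z <= 1 -> ex_series (fun n => z ^ S n / INR (S n) ^ k).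
Proof.
  intros Hk Hz. apply (@ex_series_le R_AbsRing R_CompleteNormedModule) with (b := fun n => / INR (S n) ^ 2).
  - intro n. apply term_bound; auto.
  - apply ex_series_sq.
Qed.

Definition cl (z : R) : R := Rmax (-1) (Rmin 1 z).
Definition Lc (k : nat) (z : R) : R := Li k (cl z).

Lemma cl_bound z : Rabs (cl z) <= 1.
Proof. unfold cl, Rmax, Rmin. repeat destruct Rle_dec; apply Rabs_le; lra. Qed.

Lemma cl_id z : Rabs z <= 1 -> cl z = z.
Proof. intro H. apply Rabs_le_between in H. unfold cl, Rmax, Rmin. repeat destruct Rle_dec; lra. Qed.

Lemma Lc_Li k z : Rabs z <= 1 -> Lc k z = Li k z.
Proof. intro H. unfold Lc. rewrite cl_id; auto. Qed.

Lemma cl_lip x y : Rabs (cl x - cl y) <= Rabs (x - y).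
Proof.
  unfold cl, Rmax, Rmin. repeat destruct Rle_dec;
  try (rewrite Rminus_diag, Rabs_R0; apply Rabs_pos);
  unfold Rabs; repeat destruct Rcase_abs; lra.
Qed.

Lemma cl_cont x : continuity_pt cl x.
Proof.
  unfold continuity_pt, continue_in, limit1_in, limit_in. intros eps He.
  exists eps. split; auto. intros y [_ Hy]. simpl in *. unfold Rdist in *.
  eapply Rle_lt_trans; [apply cl_lip| auto].
Qed.

Lemma cont_pow (g : R -> R) y n : continuity_pt g y -> continuity_pt (fun t => g t ^ n) y.
Proof.
  intro Hg. induction n.
  - simpl. apply continuity_pt_const. intros a b; reflexivity.
  - simpl. apply continuity_pt_mult; auto.
Qed.

Lemma cont_SP k n y : continuity_pt (SP (fun n y => cl y ^ S n / INR (S n) ^ k) n) y.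
Proof.
  unfold SP. induction n.
  - cbn [sum_f_R0]. apply continuity_pt_div. apply cont_pow, cl_cont. apply continuity_pt_const.
    intros a b; reflexivity. apply pow_nonzero, Rgt_not_eq, INRS_pos.
  - cbn [sum_f_R0]. apply continuity_pt_plus; auto.
    apply continuity_pt_div. apply cont_pow, cl_cont. apply continuity_pt_const.
    intros a b; reflexivity. apply pow_nonzero, Rgt_not_eq, INRS_pos.
Qed.

Lemma Lc_cont k y : (2 <= k)%nat -> continuity_pt (Lc k) y.
Proof.
  intro Hk.
  set (fn := fun n y => cl y ^ S n / INR (S n) ^ k).
  assert (cvP : forall x, Un_cv (fun N => SP fn N x) (Lc k x)).
  { intro x. apply is_series_Reals. unfold Lc, Li. apply Series_correct.
    apply ex_series_Li; auto. apply cl_bound. }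
  set (cv := fun x => exist (fun l => Un_cv (fun N => SP fn N x) l) (Lc k x) (cvP x)).
  set (r0 := mkposreal (Rabs y + 1) ltac:(pose proof (Rabs_pos y); lra)).
  assert (HN : CVN_r fn r0).
  { exists (fun n => / INR (S n) ^ 2). exists (Series (fun n => / INR (S n) ^ 2)). split.
    - apply is_series_Reals. eapply is_series_ext; [|apply Series_correct, ex_series_sq].
      intro n. rewrite Rabs_pos_eq; auto. apply Rlt_le, Rinv_0_lt_compat, pow_lt, INRS_pos.
    - intros n z _. apply term_bound; auto. apply cl_bound. }
  pose proof (CVN_CVU fn cv r0 HN) as HU.
  assert (Hc := CVU_continuity _ _ _ _ HU (fun n z _ => cont_SP k n z) y).
  apply Hc. unfold Boule. simpl. rewrite Rminus_0_r. lra.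
Qed.

Lemma Lc_derive k z : Rabs z < 1 -> is_derive (Lc (S k)) z (PSeries (ak k) z).
Proof.
  intro Hz. apply is_derive_ext_loc with (f := Li (S k)).
  - assert (He : 0 < 1 - Rabs z) by lra.
    exists (mkposreal _ He). intros t Ht. unfold ball in Ht; simpl in Ht.
    unfold AbsRing_ball, abs, minus, plus, opp in Ht; simpl in Ht.
    symmetry. apply Lc_Li. pose proof (Rabs_triang_inv t z).
    replace (t + - z) with (t - z) in Ht by ring. lra.
  - apply Li_derive; auto.
Qed.

Lemma ex_derive_Lc k z : Rabs z < 1 -> ex_derive (Lc (S k)) z.
Proof. intro H. eexists. apply Lc_derive; eauto. Qed.

Lemma Derive_Lc k z : Rabs z < 1 -> z <> 0 -> Derive (Lc (S k)) z = Li k z / z.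
Proof. intros H H0. rewrite <- PS_Li; auto. apply is_derive_unique, Lc_derive; auto. Qed.

Lemma Lc_comp_cont k (g : R -> R) y : (2 <= k)%nat -> continuity_pt g y -> continuity_pt (fun t => Lc k (g t)) y.
Proof. intros Hk Hg. apply (continuity_pt_comp g (Lc k)); auto. apply Lc_cont; auto. Qed.



Lemma dLc k (g : R -> R) x dg : is_derive g x dg -> Rabs (g x) < 1 -> g x <> 0 ->
  is_derive (fun t => Lc (S k) (g t)) x (Li k (g x) / g x * dg).
Proof.
  intros Hg H1 H0. rewrite <- PS_Li by auto. rewrite Rmult_comm.
  apply (is_derive_comp (Lc (S k)) g x). apply Lc_derive; auto. auto.
Qed.

Lemma D_add (f g : R -> R) x a b : is_derive f x a -> is_derive g x b -> is_derive (fun t => f t + g t) x (a + b).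
Proof. intros. apply (is_derive_plus (K:=R_AbsRing) (V:=R_NormedModule)); auto. Qed.
Lemma D_sub (f g : R -> R) x a b : is_derive f x a -> is_derive g x b -> is_derive (fun t => f t - g t) x (a - b).
Proof. intros. apply (is_derive_minus (K:=R_AbsRing) (V:=R_NormedModule)); auto. Qed.
Lemma D_scal (f : R -> R) c x a : is_derive f x a -> is_derive (fun t => c * f t) x (c * a).
Proof. intros. apply is_derive_scal; auto. Qed.
Lemma D_mul (f g : R -> R) x a b : is_derive f x a -> is_derive g x b -> is_derive (fun t => f t * g t) x (a * g x + f x * b).
Proof. intros. apply (is_derive_mult (K:=R_AbsRing)); auto. intros; apply Rmult_comm. Qed.
Lemma D_val (f : R -> R) x (a b : R) : is_derive f x a -> @eq R a b -> is_derive f x b.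
Proof. intros H ->; auto. Qed.

Ltac dcomb :=
  match goal with
  | |- is_derive (fun t => @?f t + @?g t) ?x _ => refine (D_add f g x _ _ _ _); cbv beta; dcomb
  | |- is_derive (fun t => @?f t - @?g t) ?x _ => refine (D_sub f g x _ _ _ _); cbv beta; dcomb
  | |- is_derive (fun t => ?c * @?f t) ?x _ => refine (D_scal f c x _ _); cbv beta; dcomb
  | _ => eassumption
  end.

Lemma C_add (f g : R -> R) x : continuity_pt f x -> continuity_pt g x -> continuity_pt (fun t => f t + g t) x.
Proof. apply continuity_pt_plus. Qed.
Lemma C_sub (f g : R -> R) x : continuity_pt f x -> continuity_pt g x -> continuity_pt (fun t => f t - g t) x.
Proof. apply continuity_pt_minus. Qed.
Lemma C_scal (f : R -> R) c x : continuity_pt f x -> continuity_pt (fun t => c * f t) x.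
Proof. intro. apply continuity_pt_mult; auto. apply continuity_pt_const. intros a b; auto. Qed.
Lemma C_mul (f g : R -> R) x : continuity_pt f x -> continuity_pt g x -> continuity_pt (fun t => f t * g t) x.
Proof. apply continuity_pt_mult. Qed.

Lemma ln_div' a b : 0 < a -> 0 < b -> ln (a / b) = ln a - ln b.
Proof. intros. apply ln_div; auto. Qed.

Lemma ln_sq a : 0 < a -> ln (a ^ 2) = 2 * ln a.
Proof. intro. rewrite ln_pow by auto. simpl. ring. Qed.

Ltac ccomb :=
  match goal with
  | |- continuity_pt (fun t => @?f t + @?g t) ?x => apply (C_add f g x); cbv beta; [ccomb|ccomb]
  | |- continuity_pt (fun t => @?f t - @?g t) ?x => apply (C_sub f g x); cbv beta; [ccomb|ccomb]
  | |- continuity_pt (fun t => ?c * @?f t) ?x => apply (C_scal f c x); cbv beta; ccomb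
  | |- continuity_pt (fun t => Lc ?k (@?g t)) ?x => apply (Lc_comp_cont k g x); [lia| apply ex_derive_cpt; auto_derive]
  | |- continuity_pt (fun t => Lc ?k t) ?x => apply (Lc_comp_cont k (fun t => t) x); [lia| apply ex_derive_cpt; auto_derive]
  | _ => apply ex_derive_cpt; auto_derive
  end.

Lemma absdiv a b : 0 < b -> - b < a < b -> Rabs (a / b) < 1.
Proof.
  intros Hb Ha. unfold Rdiv. rewrite Rabs_mult, Rabs_inv, (Rabs_pos_eq b) by lra.
  apply (Rmult_lt_reg_r b); auto. rewrite Rmult_assoc, Rinv_l by lra.
  rewrite Rmult_1_r, Rmult_1_l. apply Rabs_def1; lra.
Qed.

Lemma absdivn a b : b < 0 -> b < a < - b -> Rabs (a / b) < 1.
Proof.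
  intros Hb Ha. replace (a / b) with ((-a)/(-b)) by (field; lra). apply absdiv; lra.
Qed.

Lemma divnz a b : a <> 0 -> b <> 0 -> a / b <> 0.
Proof. intros. unfold Rdiv. apply Rmult_integral_contrapositive. split; auto. apply Rinv_neq_0_compat; auto. Qed.

Lemma Lc0 k : Lc k 0 = 0.
Proof. unfold Lc. rewrite cl_id by (rewrite Rabs_R0; lra). apply Li_0. Qed.

Lemma Lc1 k : Lc k 1 = zeta k.
Proof. unfold Lc. rewrite cl_id by (rewrite Rabs_R1; lra). reflexivity. Qed.

Lemma absdivn_le a b : b < 0 -> b <= a <= - b -> Rabs (a / b) <= 1.
Proof.
  intros Hb Ha. replace (a / b) with ((-a)/(-b)) by (field; lra).
  unfold Rdiv. rewrite Rabs_mult, Rabs_inv, (Rabs_pos_eq (-b)) by lra.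
  apply (Rmult_le_reg_r (-b)); [lra|]. rewrite Rmult_assoc, Rinv_l by lra.
  rewrite Rmult_1_r, Rmult_1_l. apply Rabs_le; lra.
Qed.

Lemma absdiv_le a b : 0 < b -> - b <= a <= b -> Rabs (a / b) <= 1.
Proof.
  intros Hb Ha. unfold Rdiv. rewrite Rabs_mult, Rabs_inv, (Rabs_pos_eq b) by lra.
  apply (Rmult_le_reg_r b); [lra|]. rewrite Rmult_assoc, Rinv_l by lra.
  rewrite Rmult_1_r, Rmult_1_l. apply Rabs_le; lra.
Qed.

Definition betaF (x : R) := Lc 2 x + Lc 2 (x / (2*x - 1)) - /2 * Lc 2 (x^2 / (2*x - 1)) + /4 * ln (1 - 2*x) ^ 2.

Lemma beta_id x : 0 <= x <= 1/3 -> betaF x = 0.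
Proof.
  intro Hx.
  transitivity (betaF 0).
  2:{ unfold betaF. replace (0 / (2*0-1)) with 0 by field. replace (0^2 / (2*0-1)) with 0 by field.
      unfold Lc. replace (cl 0) with 0 by (symmetry; apply cl_id; rewrite Rabs_R0; lra).
      rewrite Li_0. replace (1 - 2*0) with 1 by ring. rewrite ln_1. ring. }
  apply const_eq.
  - intros y Hy. assert (Hy' : 0 < y < 1/3) by (mm Hy; lra).
    assert (d1 : is_derive (fun t => Lc 2 t) y (Li 1 y / y * 1)).
    { apply (dLc 1 (fun t => t)). auto_derive; auto. rewrite Rabs_pos_eq; lra. lra. }
    assert (d2 : is_derive (fun t => Lc 2 (t / (2*t-1))) y (Li 1 (y/(2*y-1)) / (y/(2*y-1)) * (-1/(2*y-1)^2))).
    { apply (dLc 1 (fun t => t / (2*t-1))). auto_derive. lra. field. lra.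
      apply Rabs_def1. apply (Rmult_lt_reg_r (1 - 2*y)); [lra|]. 
      replace (y / (2*y-1) * (1 - 2*y)) with (-y) by (field; lra). lra.
      apply (Rmult_lt_reg_r (1 - 2*y)); [lra|]. 
      replace (y / (2*y-1) * (1 - 2*y)) with (-y) by (field; lra). lra.
      unfold Rdiv. apply Rmult_integral_contrapositive. split; [lra|]. apply Rinv_neq_0_compat; lra. }
    assert (d3 : is_derive (fun t => Lc 2 (t^2 / (2*t-1))) y (Li 1 (y^2/(2*y-1)) / (y^2/(2*y-1)) * ((2*y^2-2*y)/(2*y-1)^2))).
    { apply (dLc 1 (fun t => t^2 / (2*t-1))). auto_derive. lra. field. lra.
      apply Rabs_def1. apply (Rmult_lt_reg_r (1 - 2*y)); [lra|]. 
      replace (y^2 / (2*y-1) * (1 - 2*y)) with (-y^2) by (field; lra). nra.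
      apply (Rmult_lt_reg_r (1 - 2*y)); [lra|]. 
      replace (y^2 / (2*y-1) * (1 - 2*y)) with (-y^2) by (field; lra). nra.
      unfold Rdiv. apply Rmult_integral_contrapositive. split; [apply pow_nonzero; lra|]. apply Rinv_neq_0_compat; lra. }
    assert (d4 : is_derive (fun t => ln (1 - 2*t) ^ 2) y (2 * ln (1 - 2*y) * (-2 / (1 - 2*y)))).
    { auto_derive. lra. unfold Rminus, Rdiv. field. lra. }
    unfold betaF. eapply D_val. dcomb.
    assert (B2 : Rabs (y / (2*y-1)) < 1).
    { apply Rabs_def1; apply (Rmult_lt_reg_r (1 - 2*y)); try lra;
      replace (y / (2*y-1) * (1 - 2*y)) with (-y) by (field; lra); lra. }
    assert (B3 : Rabs (y^2 / (2*y-1)) < 1).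
    { assert (y^2 < 1 - 2*y) by nra. assert (0 <= y^2) by nra.
      apply Rabs_def1; apply (Rmult_lt_reg_r (1 - 2*y)); try lra;
      replace (y^2 / (2*y-1) * (1 - 2*y)) with (-y^2) by (field; lra); lra. }
    assert (B1 : Rabs y < 1) by (rewrite Rabs_pos_eq; lra).
    rewrite (Li1 _ B1), (Li1 _ B2), (Li1 _ B3).
    replace (1 - y / (2*y-1)) with ((1-y)/(1-2*y)) by (field; lra).
    replace (1 - y^2 / (2*y-1)) with ((1-y)^2/(1-2*y)) by (field; lra).
    rewrite !ln_div' by (try apply pow_lt; lra).
    rewrite ln_sq by lra.
    field. repeat split; lra.
  - intros y Hy. assert (Hy' : 0 <= y <= 1/3) by (mm Hy; lra).
    unfold betaF. ccomb; repeat split; lra.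
Qed.

Definition dup2F x := Lc 2 x + Lc 2 (- x) - /2 * Lc 2 (x ^ 2).

Lemma dup2_id x : 0 <= x <= 1 -> dup2F x = 0.
Proof.
  intro Hx. transitivity (dup2F 0).
  2:{ unfold dup2F. rewrite Ropp_0. replace (0^2) with 0 by ring. rewrite Lc0. ring. }
  apply const_eq.
  - intros y Hy. assert (Hy' : 0 < y < 1) by (mm Hy; lra).
    assert (B1 : Rabs y < 1) by (apply Rabs_def1; lra).
    assert (B2 : Rabs (-y) < 1) by (apply Rabs_def1; lra).
    assert (B3 : Rabs (y^2) < 1) by (rewrite Rabs_pos_eq; nra).
    assert (d1 : is_derive (fun t => Lc 2 t) y (Li 1 y / y * 1)).
    { apply (dLc 1 (fun t => t)); auto. auto_derive; auto. lra. }
    assert (d2 : is_derive (fun t => Lc 2 (- t)) y (Li 1 (-y) / (-y) * (-1))).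
    { apply (dLc 1 (fun t => - t)); auto. auto_derive; auto. lra. }
    assert (d3 : is_derive (fun t => Lc 2 (t ^ 2)) y (Li 1 (y^2) / (y^2) * (2 * y))).
    { apply (dLc 1 (fun t => t ^ 2)); auto. auto_derive; auto. ring. apply pow_nonzero; lra. }
    unfold dup2F. eapply D_val. dcomb.
    rewrite (Li1 _ B1), (Li1 _ B2), (Li1 _ B3).
    replace (1 - y^2) with ((1 - y) * (1 - - y)) by ring.
    rewrite ln_mult by lra. field. lra.
  - intros y Hy. assert (Hy' : 0 <= y <= 1) by (mm Hy; lra).
    unfold dup2F. ccomb; repeat split; try lra.
Qed.

Lemma Li2_m1 : Li 2 (-1) = - / 2 * zeta 2.
Proof.
  pose proof (dup2_id 1 ltac:(lra)) as H. unfold dup2F in H.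
  replace (1 ^ 2) with 1 in H by ring. rewrite Lc1 in H.
  rewrite Lc_Li in H by (apply Rabs_le; lra). replace (- (1)) with (-1) in H by ring. lra.
Qed.

Lemma dup2_Li x : 0 <= x <= 1 -> Li 2 x + Li 2 (-x) = /2 * Li 2 (x^2).
Proof.
  intro Hx. pose proof (dup2_id x Hx) as H. unfold dup2F in H.
  rewrite !Lc_Li in H; try (rewrite ?Rabs_Ropp; apply Rabs_le; lra).
  lra. rewrite Rabs_pos_eq; [|apply pow_le; lra]. rewrite <- (pow1 2). apply pow_incr; lra.
Qed.

Definition dup3F x := Lc 3 x + Lc 3 (- x) - /4 * Lc 3 (x ^ 2).

Lemma dup3_id x : 0 <= x <= 1 -> dup3F x = 0.
Proof.
  intro Hx. transitivity (dup3F 0).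
  2:{ unfold dup3F. rewrite Ropp_0. replace (0^2) with 0 by ring. rewrite Lc0. ring. }
  apply const_eq.
  - intros y Hy. assert (Hy' : 0 < y < 1) by (mm Hy; lra).
    assert (B1 : Rabs y < 1) by (apply Rabs_def1; lra).
    assert (B2 : Rabs (-y) < 1) by (apply Rabs_def1; lra).
    assert (B3 : Rabs (y^2) < 1) by (rewrite Rabs_pos_eq; nra).
    assert (d1 : is_derive (fun t => Lc 3 t) y (Li 2 y / y * 1)).
    { apply (dLc 2 (fun t => t)); auto. auto_derive; auto. lra. }
    assert (d2 : is_derive (fun t => Lc 3 (- t)) y (Li 2 (-y) / (-y) * (-1))).
    { apply (dLc 2 (fun t => - t)); auto. auto_derive; auto. lra. }
    assert (d3 : is_derive (fun t => Lc 3 (t ^ 2)) y (Li 2 (y^2) / (y^2) * (2 * y))).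
    { apply (dLc 2 (fun t => t ^ 2)); auto. auto_derive; auto. ring. apply pow_nonzero; lra. }
    unfold dup3F. eapply D_val. dcomb.
    pose proof (dup2_Li y ltac:(lra)) as E.
    replace (Li 2 (-y)) with (/2 * Li 2 (y^2) - Li 2 y) by lra.
    field. lra.
  - intros y Hy. assert (Hy' : 0 <= y <= 1) by (mm Hy; lra).
    unfold dup3F. ccomb; repeat split; try lra.
Qed.

Lemma Li3_m1 : Li 3 (-1) = - 3 / 4 * zeta 3.
Proof.
  pose proof (dup3_id 1 ltac:(lra)) as H. unfold dup3F in H.
  replace (1 ^ 2) with 1 in H by ring. rewrite Lc1 in H.
  rewrite Lc_Li in H by (apply Rabs_le; lra). replace (- (1)) with (-1) in H by ring. lra.
Qed.

Lemma dup3_half : Li 3 (1/2) + Li 3 (-(1/2)) = /4 * Li 3 (1/4).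
Proof.
  pose proof (dup3_id (1/2) ltac:(lra)) as H. unfold dup3F in H.
  replace ((1/2) ^ 2) with (1/4) in H by field.
  rewrite !Lc_Li in H; try (rewrite ?Rabs_Ropp; apply Rabs_le; lra). lra.
Qed.

Definition L2F z := Lc 2 z + Lc 2 (z / (z - 1)) + /2 * ln (1 - z) ^ 2.

Lemma L2_id z : 0 <= z <= 1/2 -> L2F z = 0.
Proof.
  intro Hz. transitivity (L2F 0).
  2:{ unfold L2F. replace (0 / (0-1)) with 0 by field. rewrite Lc0, Rminus_0_r, ln_1. ring. }
  apply const_eq.
  - intros y Hy. assert (Hy' : 0 < y < 1/2) by (mm Hy; lra).
    assert (B1 : Rabs y < 1) by (apply Rabs_def1; lra).
    assert (B2 : Rabs (y / (y - 1)) < 1) by (apply absdivn; lra).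
    assert (d1 : is_derive (fun t => Lc 2 t) y (Li 1 y / y * 1)).
    { apply (dLc 1 (fun t => t)); auto. auto_derive; auto. lra. }
    assert (d2 : is_derive (fun t => Lc 2 (t / (t - 1))) y (Li 1 (y/(y-1)) / (y/(y-1)) * (-1 / (y-1)^2))).
    { apply (dLc 1 (fun t => t / (t - 1))); auto. auto_derive. lra. field. lra. apply divnz; lra. }
    assert (d3 : is_derive (fun t => ln (1 - t) ^ 2) y (2 * ln (1 - y) * (-1 / (1 - y)))).
    { auto_derive. lra. unfold Rminus, Rdiv. field. lra. }
    unfold L2F. eapply D_val. dcomb.
    rewrite (Li1 _ B1), (Li1 _ B2).
    replace (1 - y / (y - 1)) with (/ (1 - y)) by (field; lra).
    rewrite ln_Rinv by lra. field. lra.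
  - intros y Hy. assert (Hy' : 0 <= y <= 1/2) by (mm Hy; lra).
    unfold L2F. ccomb; repeat split; try lra.
Qed.

Lemma L2_Li z : 0 <= z <= 1/2 -> Li 2 z + Li 2 (z / (z - 1)) = - /2 * ln (1 - z) ^ 2.
Proof.
  intro Hz. pose proof (L2_id z Hz) as H. unfold L2F in H.
  rewrite !Lc_Li in H. lra. all: try (apply Rabs_le; lra). all: apply absdivn_le; lra.
Qed.

Lemma Li2_half : Li 2 (1/2) = /2 * zeta 2 - /2 * ln 2 ^ 2.
Proof.
  pose proof (L2_Li (1/2) ltac:(lra)) as H.
  replace (1/2 / (1/2 - 1)) with (-1) in H by field. rewrite Li2_m1 in H.
  replace (1 - 1/2) with (/2) in H by field. rewrite ln_Rinv in H by lra. lra.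
Qed.

Definition E2F x := Lc 2 x + Lc 2 (1 - x) + ln x * ln (1 - x).

Lemma E2_id x : 0 < x < 1 -> E2F x = zeta 2.
Proof.
  intro Hx. transitivity (E2F (1/2)).
  2:{ unfold E2F. replace (1 - 1/2) with (1/2) by field. rewrite Lc_Li by (apply Rabs_le; lra).
      rewrite Li2_half. replace (1/2) with (/2) by field. rewrite ln_Rinv by lra. field. }
  apply const_eq.
  - intros y Hy. assert (Hy' : 0 < y < 1) by (mm Hy; lra).
    assert (B1 : Rabs y < 1) by (apply Rabs_def1; lra).
    assert (B2 : Rabs (1 - y) < 1) by (apply Rabs_def1; lra).
    assert (d1 : is_derive (fun t => Lc 2 t) y (Li 1 y / y * 1)).
    { apply (dLc 1 (fun t => t)); auto. auto_derive; auto. lra. }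
    assert (d2 : is_derive (fun t => Lc 2 (1 - t)) y (Li 1 (1 - y) / (1 - y) * (-1))).
    { apply (dLc 1 (fun t => 1 - t)); auto. auto_derive; auto. lra. }
    assert (d3 : is_derive (fun t => ln t * ln (1 - t)) y (/ y * ln (1 - y) + ln y * (-1 / (1 - y)))).
    { auto_derive. lra. unfold Rminus, Rdiv. field. lra. }
    unfold E2F. eapply D_val. dcomb.
    rewrite (Li1 _ B1), (Li1 _ B2). replace (1 - (1 - y)) with y by ring.
    field. lra.
  - intros y Hy. assert (Hy' : 0 < y < 1) by (mm Hy; lra).
    unfold E2F. ccomb; repeat split; try lra.
Qed.

Lemma E2_Li x : 0 < x < 1 -> Li 2 x + Li 2 (1 - x) = zeta 2 - ln x * ln (1 - x).
Proof.
  intro Hx. pose proof (E2_id x Hx) as H. unfold E2F in H.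
  rewrite !Lc_Li in H by (apply Rabs_le; lra). lra.
Qed.

Definition W2aF z := Lc 2 (- ((1 - z) / (1 + z))) - Lc 2 ((1 - z) / (1 + z)) + 2 * Lc 2 (1 - z) - /2 * Lc 2 (1 - z^2).
Definition W2bF z := Lc 2 (- ((1 - z) / (1 + z))) - Lc 2 ((1 - z) / (1 + z)) + 2 * Lc 2 (1 / (1 + z)) + /2 * Lc 2 (1 - z^2) - zeta 2 + ln (1 + z) ^ 2.

Lemma W2_common y : 0 < y < 1 ->
  Rabs ((1 - y) / (1 + y)) < 1 /\ Rabs (- ((1 - y) / (1 + y))) < 1 /\ (1 - y) / (1 + y) <> 0 /\
  - ((1 - y) / (1 + y)) <> 0 /\ Rabs (1 - y^2) < 1 /\ 1 - y^2 <> 0 /\ Rabs (1 - y) < 1 /\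
  Rabs (1 / (1 + y)) < 1 /\
  is_derive (fun t => Lc 2 ((1 - t) / (1 + t))) y (Li 1 ((1-y)/(1+y)) / ((1-y)/(1+y)) * (-2 / (1+y)^2)) /\
  is_derive (fun t => Lc 2 (- ((1 - t) / (1 + t)))) y (Li 1 (-((1-y)/(1+y))) / (-((1-y)/(1+y))) * (2 / (1+y)^2)) /\
  is_derive (fun t => Lc 2 (1 - t)) y (Li 1 (1 - y) / (1 - y) * (-1)) /\
  is_derive (fun t => Lc 2 (1 - t^2)) y (Li 1 (1 - y^2) / (1 - y^2) * (-2 * y)) /\
  is_derive (fun t => Lc 2 (1 / (1 + t))) y (Li 1 (1/(1+y)) / (1/(1+y)) * (-1 / (1+y)^2)) /\
  is_derive (fun t => Lc 3 ((1 - t) / (1 + t))) y (Li 2 ((1-y)/(1+y)) / ((1-y)/(1+y)) * (-2 / (1+y)^2)) /\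
  is_derive (fun t => Lc 3 (- ((1 - t) / (1 + t)))) y (Li 2 (-((1-y)/(1+y))) / (-((1-y)/(1+y))) * (2 / (1+y)^2)) /\
  is_derive (fun t => Lc 3 (1 - t)) y (Li 2 (1 - y) / (1 - y) * (-1)) /\
  is_derive (fun t => Lc 3 (1 - t^2)) y (Li 2 (1 - y^2) / (1 - y^2) * (-2 * y)) /\
  is_derive (fun t => Lc 3 (1 / (1 + t))) y (Li 2 (1/(1+y)) / (1/(1+y)) * (-1 / (1+y)^2)).
Proof.
  intro Hy.
  assert (B1 : Rabs ((1 - y) / (1 + y)) < 1) by (apply absdiv; lra).
  assert (B2 : Rabs (- ((1 - y) / (1 + y))) < 1) by (rewrite Rabs_Ropp; auto).
  assert (N1 : (1 - y) / (1 + y) <> 0) by (apply divnz; lra).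
  assert (N2 : - ((1 - y) / (1 + y)) <> 0) by (apply Ropp_neq_0_compat; auto).
  assert (B3 : Rabs (1 - y^2) < 1) by (apply Rabs_def1; nra).
  assert (N3 : 1 - y^2 <> 0) by nra.
  assert (B4 : Rabs (1 - y) < 1) by (apply Rabs_def1; lra).
  assert (B5 : Rabs (1 / (1 + y)) < 1) by (apply absdiv; lra).
  assert (N5 : 1 / (1 + y) <> 0) by (apply divnz; lra).
  assert (d1 : is_derive (fun t => Lc 2 ((1 - t) / (1 + t))) y (Li 1 ((1-y)/(1+y)) / ((1-y)/(1+y)) * (-2 / (1+y)^2))).
  { apply (dLc 1 (fun t => (1 - t) / (1 + t))); auto. auto_derive. lra. field. lra. }
  assert (d2 : is_derive (fun t => Lc 2 (- ((1 - t) / (1 + t)))) y (Li 1 (-((1-y)/(1+y))) / (-((1-y)/(1+y))) * (2 / (1+y)^2))).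
  { apply (dLc 1 (fun t => - ((1 - t) / (1 + t)))); auto. auto_derive. lra. field. lra. }
  assert (d3 : is_derive (fun t => Lc 2 (1 - t)) y (Li 1 (1 - y) / (1 - y) * (-1))).
  { apply (dLc 1 (fun t => 1 - t)); auto. auto_derive; auto. lra. }
  assert (d4 : is_derive (fun t => Lc 2 (1 - t^2)) y (Li 1 (1 - y^2) / (1 - y^2) * (-2 * y))).
  { apply (dLc 1 (fun t => 1 - t^2)); auto. auto_derive; auto. ring. }
  assert (d5 : is_derive (fun t => Lc 2 (1 / (1 + t))) y (Li 1 (1/(1+y)) / (1/(1+y)) * (-1 / (1+y)^2))).
  { apply (dLc 1 (fun t => 1 / (1 + t))); auto. auto_derive. lra. field. lra. }
  assert (d6 : is_derive (fun t => Lc 3 ((1 - t) / (1 + t))) y (Li 2 ((1-y)/(1+y)) / ((1-y)/(1+y)) * (-2 / (1+y)^2))).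
  { apply (dLc 2 (fun t => (1 - t) / (1 + t))); auto. auto_derive. lra. field. lra. }
  assert (d7 : is_derive (fun t => Lc 3 (- ((1 - t) / (1 + t)))) y (Li 2 (-((1-y)/(1+y))) / (-((1-y)/(1+y))) * (2 / (1+y)^2))).
  { apply (dLc 2 (fun t => - ((1 - t) / (1 + t)))); auto. auto_derive. lra. field. lra. }
  assert (d8 : is_derive (fun t => Lc 3 (1 - t)) y (Li 2 (1 - y) / (1 - y) * (-1))).
  { apply (dLc 2 (fun t => 1 - t)); auto. auto_derive; auto. lra. }
  assert (d9 : is_derive (fun t => Lc 3 (1 - t^2)) y (Li 2 (1 - y^2) / (1 - y^2) * (-2 * y))).
  { apply (dLc 2 (fun t => 1 - t^2)); auto. auto_derive; auto. ring. }
  assert (d10 : is_derive (fun t => Lc 3 (1 / (1 + t))) y (Li 2 (1/(1+y)) / (1/(1+y)) * (-1 / (1+y)^2))).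
  { apply (dLc 2 (fun t => 1 / (1 + t))); auto. auto_derive. lra. field. lra. }
  repeat (split; [assumption|]); assumption.
Qed.

Lemma W2_logs y : 0 < y < 1 ->
  Li 1 ((1-y)/(1+y)) = - (ln 2 + ln y - ln (1 + y)) /\
  Li 1 (-((1-y)/(1+y))) = - (ln 2 - ln (1 + y)) /\
  Li 1 (1 - y) = - ln y /\ Li 1 (1 - y^2) = - (2 * ln y) /\
  Li 1 (1/(1+y)) = - (ln y - ln (1 + y)).
Proof.
  intro Hy. repeat split.
  - rewrite Li1 by (apply absdiv; lra).
    replace (1 - (1 - y) / (1 + y)) with ((2 * y) / (1 + y)) by (field; lra).
    rewrite ln_div', ln_mult; lra.
  - rewrite Li1 by (rewrite Rabs_Ropp; apply absdiv; lra).
    replace (1 - - ((1 - y) / (1 + y))) with (2 / (1 + y)) by (field; lra).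
    rewrite ln_div'; lra.
  - rewrite Li1 by (apply Rabs_def1; lra). f_equal. f_equal. ring.
  - rewrite Li1 by (apply Rabs_def1; nra). replace (1 - (1 - y^2)) with (y^2) by ring.
    rewrite ln_sq; lra.
  - rewrite Li1 by (apply absdiv; lra).
    replace (1 - 1 / (1 + y)) with (y / (1 + y)) by (field; lra).
    rewrite ln_div'; lra.
Qed.

Lemma W2a_id z : 0 < z <= 1 -> W2aF z = 0.
Proof.
  intro Hz. transitivity (W2aF 1).
  2:{ unfold W2aF. replace (1 - 1) with 0 by ring. replace (1 - 1^2) with 0 by ring.
      replace (- (0 / (1 + 1))) with 0 by field. replace (0 / (1 + 1)) with 0 by field.
      rewrite Lc0. ring. }
  apply const_eq.
  - intros y Hy. assert (Hy' : 0 < y < 1) by (mm Hy; lra).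
    destruct (W2_common y Hy') as (B1 & B2 & N1 & N2 & B3 & N3 & B4 & B5 & d1 & d2 & d3 & d4 & d5 & _).
    destruct (W2_logs y Hy') as (l1 & l2 & l3 & l4 & l5).
    unfold W2aF. eapply D_val. dcomb.
    rewrite l1, l2, l3, l4. field. lra.
  - intros y Hy. assert (Hy' : 0 < y <= 1) by (mm Hy; lra).
    unfold W2aF. ccomb; repeat split; try lra.
Qed.

Lemma W2b_id z : 0 < z <= 1 -> W2bF z = 0.
Proof.
  intro Hz. transitivity (W2bF 1).
  2:{ unfold W2bF. replace (1 - 1^2) with 0 by ring.
      replace (- ((1 - 1) / (1 + 1))) with 0 by field. replace ((1 - 1) / (1 + 1)) with 0 by field.
      replace (1 / (1 + 1)) with (1/2) by field. rewrite Lc0.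
      rewrite Lc_Li by (apply Rabs_le; lra). rewrite Li2_half. replace (1 + 1) with 2 by ring. field. }
  apply const_eq.
  - intros y Hy. assert (Hy' : 0 < y < 1) by (mm Hy; lra).
    destruct (W2_common y Hy') as (B1 & B2 & N1 & N2 & B3 & N3 & B4 & B5 & d1 & d2 & d3 & d4 & d5 & _).
    destruct (W2_logs y Hy') as (l1 & l2 & l3 & l4 & l5).
    assert (d6 : is_derive (fun _ : R => zeta 2) y 0) by (auto_derive; auto).
    assert (d7 : is_derive (fun t => ln (1 + t) ^ 2) y (2 * ln (1 + y) / (1 + y))).
    { auto_derive. lra. unfold Rdiv. field. lra. }
    unfold W2bF. eapply D_val. dcomb.
    rewrite l1, l2, l4, l5. field. lra.
  - intros y Hy. assert (Hy' : 0 < y <= 1) by (mm Hy; lra).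
    unfold W2bF. ccomb; repeat split; try lra.
Qed.

Lemma W2a_Li y : 0 < y < 1 -> Li 2 (- ((1 - y) / (1 + y))) - Li 2 ((1 - y) / (1 + y)) + 2 * Li 2 (1 - y) - /2 * Li 2 (1 - y^2) = 0.
Proof.
  intro Hy. destruct (W2_common y Hy) as (B1 & B2 & _ & _ & B3 & _ & B4 & B5 & _).
  pose proof (W2a_id y ltac:(lra)) as H. unfold W2aF in H.
  rewrite !Lc_Li in H by lra. exact H.
Qed.

Lemma W2b_Li y : 0 < y < 1 -> Li 2 (- ((1 - y) / (1 + y))) - Li 2 ((1 - y) / (1 + y)) + 2 * Li 2 (1 / (1 + y)) + /2 * Li 2 (1 - y^2) - zeta 2 + ln (1 + y) ^ 2 = 0.
Proof.
  intro Hy. destruct (W2_common y Hy) as (B1 & B2 & _ & _ & B3 & _ & B4 & B5 & _).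
  pose proof (W2b_id y ltac:(lra)) as H. unfold W2bF in H.
  rewrite !Lc_Li in H by lra. exact H.
Qed.

Definition W3F z := Lc 3 ((1 - z) / (1 + z)) - Lc 3 (- ((1 - z) / (1 + z))) - 2 * Lc 3 (1 - z) - 2 * Lc 3 (1 / (1 + z))
  + /2 * Lc 3 (1 - z^2) - zeta 2 * ln (1 + z) + /3 * ln (1 + z) ^ 3.

Lemma W3_id z : 0 <= z <= 1 -> W3F z = - 7 / 4 * zeta 3.
Proof.
  intro Hz. transitivity (W3F 0).
  2:{ unfold W3F. replace ((1 - 0) / (1 + 0)) with 1 by field. replace (1 - 0) with 1 by ring.
      replace (1 / (1 + 0)) with 1 by field. replace (1 - 0^2) with 1 by ring.
      replace (1 + 0) with 1 by ring. rewrite ln_1, Lc1.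
      rewrite Lc_Li by (apply Rabs_le; lra). replace (- (1)) with (-1) by ring. rewrite Li3_m1. field. }
  apply const_eq.
  - intros y Hy. assert (Hy' : 0 < y < 1) by (mm Hy; lra).
    destruct (W2_common y Hy') as (B1 & B2 & N1 & N2 & B3 & N3 & B4 & B5 & _ & _ & _ & _ & _ & d1 & d2 & d3 & d4 & d5).
    assert (d6 : is_derive (fun t => ln (1 + t)) y (/ (1 + y))) by (auto_derive; [lra|field; lra]).
    assert (d7 : is_derive (fun t => ln (1 + t) ^ 3) y (3 * ln (1 + y) ^ 2 / (1 + y))).
    { auto_derive. lra. unfold Rdiv. field. lra. }
    unfold W3F. eapply D_val. dcomb.
    pose proof (W2a_Li y Hy') as Ea. pose proof (W2b_Li y Hy') as Eb.
    replace (Li 2 (1 - y)) with (/2 * (Li 2 ((1 - y) / (1 + y)) - Li 2 (- ((1 - y) / (1 + y))) + /2 * Li 2 (1 - y^2))) by lra.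
    replace (Li 2 (1 / (1 + y))) with (/2 * (Li 2 ((1 - y) / (1 + y)) - Li 2 (- ((1 - y) / (1 + y))) - /2 * Li 2 (1 - y^2) + zeta 2 - ln (1 + y) ^ 2)) by lra.
    field. repeat split; try lra. 
  - intros y Hy. assert (Hy' : 0 <= y <= 1) by (mm Hy; lra).
    unfold W3F. ccomb; repeat split; try lra.
Qed.

Lemma Li3_half : Li 3 (1/2) = 7/8 * zeta 3 - /2 * zeta 2 * ln 2 + /6 * ln 2 ^ 3.
Proof.
  pose proof (W3_id 1 ltac:(lra)) as H. unfold W3F in H.
  replace ((1 - 1) / (1 + 1)) with 0 in H by field. replace (- 0) with 0 in H by ring.
  replace (1 - 1) with 0 in H by ring. replace (1 - 1^2) with 0 in H by ring.
  replace (1 / (1 + 1)) with (1/2) in H by field. replace (1 + 1) with 2 in H by ring.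
  rewrite Lc0 in H. rewrite Lc_Li in H by (apply Rabs_le; lra). lra.
Qed.

Lemma W3_half : Li 3 (1/3) - Li 3 (-(1/3)) - 2 * Li 3 (1/2) - 2 * Li 3 (2/3) + /2 * Li 3 (3/4)
   - zeta 2 * (ln 3 - ln 2) + /3 * (ln 3 - ln 2) ^ 3 = - 7/4 * zeta 3.
Proof.
  pose proof (W3_id (1/2) ltac:(lra)) as H. unfold W3F in H.
  replace ((1 - 1/2) / (1 + 1/2)) with (1/3) in H by field.
  replace (1 - 1/2) with (1/2) in H by field. replace (1 / (1 + 1/2)) with (2/3) in H by field.
  replace (1 - (1/2)^2) with (3/4) in H by field. replace (1 + 1/2) with (3/2) in H by field.
  rewrite !Lc_Li in H by (try rewrite Rabs_Ropp; apply Rabs_le; lra).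
  rewrite ln_div' in H by lra. exact H.
Qed.

Definition L3F x := Lc 3 x + Lc 3 (1 - x) + Lc 3 (x / (x - 1)) - /6 * ln (1 - x) ^ 3 - zeta 2 * ln (1 - x) + /2 * (ln x * ln (1 - x) ^ 2).

Lemma L3_id x : 0 < x <= 1/2 -> L3F x = zeta 3.
Proof.
  intro Hx. transitivity (L3F (1/2)).
  2:{ unfold L3F. replace (1 - 1/2) with (1/2) by field. replace (1/2 / (1/2 - 1)) with (-1) by field.
      rewrite !Lc_Li by (apply Rabs_le; lra). rewrite Li3_m1, Li3_half.
      replace (1/2) with (/2) by field. rewrite ln_Rinv by lra. field. }
  apply const_eq.
  - intros y Hy. assert (Hy' : 0 < y < 1/2) by (mm Hy; lra).
    assert (B1 : Rabs y < 1) by (apply Rabs_def1; lra).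
    assert (B2 : Rabs (1 - y) < 1) by (apply Rabs_def1; lra).
    assert (B3 : Rabs (y / (y - 1)) < 1) by (apply absdivn; lra).
    assert (d1 : is_derive (fun t => Lc 3 t) y (Li 2 y / y * 1)).
    { apply (dLc 2 (fun t => t)); auto. auto_derive; auto. lra. }
    assert (d2 : is_derive (fun t => Lc 3 (1 - t)) y (Li 2 (1 - y) / (1 - y) * (-1))).
    { apply (dLc 2 (fun t => 1 - t)); auto. auto_derive; auto. lra. }
    assert (d3 : is_derive (fun t => Lc 3 (t / (t - 1))) y (Li 2 (y/(y-1)) / (y/(y-1)) * (-1 / (y-1)^2))).
    { apply (dLc 2 (fun t => t / (t - 1))); auto. auto_derive. lra. field. lra. apply divnz; lra. }
    assert (d4 : is_derive (fun t => ln (1 - t) ^ 3) y (3 * ln (1 - y) ^ 2 * (-1 / (1 - y)))).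
    { auto_derive. lra. unfold Rminus, Rdiv. field. lra. }
    assert (d5 : is_derive (fun t => ln (1 - t)) y (-1 / (1 - y))).
    { auto_derive. lra. unfold Rminus, Rdiv. field. lra. }
    assert (d6 : is_derive (fun t => ln t * ln (1 - t) ^ 2) y (/ y * ln (1 - y) ^ 2 + ln y * (2 * ln (1 - y) * (-1 / (1 - y))))).
    { auto_derive. lra. unfold Rminus, Rdiv. field. lra. }
    unfold L3F. eapply D_val. dcomb.
    pose proof (L2_Li y ltac:(lra)) as E1. pose proof (E2_Li y ltac:(lra)) as E2.
    replace (Li 2 (y / (y - 1))) with (- /2 * ln (1 - y) ^ 2 - Li 2 y) by lra.
    replace (Li 2 (1 - y)) with (zeta 2 - ln y * ln (1 - y) - Li 2 y) by lra.
    field. lra.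
  - intros y Hy. assert (Hy' : 0 < y <= 1/2) by (mm Hy; lra).
    unfold L3F. ccomb; repeat split; try lra.
Qed.

Lemma L3_Li x : 0 < x <= 1/2 -> Li 3 x + Li 3 (1 - x) + Li 3 (x / (x - 1)) - /6 * ln (1 - x) ^ 3 - zeta 2 * ln (1 - x) + /2 * (ln x * ln (1 - x) ^ 2) = zeta 3.
Proof.
  intro Hx. pose proof (L3_id x Hx) as H. unfold L3F in H.
  rewrite !Lc_Li in H. exact H. all: try (apply Rabs_le; lra). apply absdivn_le; lra.
Qed.

Lemma key_identity : Li 3 (-(1/3)) - 2 * Li 3 (1/3) = - 13/6 * zeta 3 + zeta 2 * ln 3 - /6 * ln 3 ^ 3.
Proof.
  pose proof (L3_Li (1/3) ltac:(lra)) as E1.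
  replace (1 - 1/3) with (2/3) in E1 by field. replace (1/3 / (1/3 - 1)) with (-(1/2)) in E1 by field.
  pose proof (L3_Li (1/4) ltac:(lra)) as E2.
  replace (1 - 1/4) with (3/4) in E2 by field. replace (1/4 / (1/4 - 1)) with (-(1/3)) in E2 by field.
  pose proof dup3_half as E3. pose proof W3_half as E4. pose proof Li3_half as E5.
  rewrite !ln_div' in E1 by lra. rewrite !ln_div' in E2 by lra.
  rewrite ln_1 in E1, E2.
  assert (ln4 : ln 4 = 2 * ln 2) by (replace 4 with (2^2) by ring; apply ln_sq; lra).
  rewrite ln4 in E2.
  set (l2 := ln 2) in *. set (l3 := ln 3) in *.
  set (A := Li 3 (1/3)) in *. set (B := Li 3 (-(1/3))) in *.
  set (P := Li 3 (2/3)) in *. set (Q := Li 3 (-(1/2))) in *.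
  set (F := Li 3 (1/4)) in *. set (T := Li 3 (3/4)) in *. set (H := Li 3 (1/2)) in *.
  assert (Hc : B - 2 * A = 2/3 * ((zeta 3 - (-/6 * (l3 - 2*l2)^3 - zeta 2 * (l3 - 2*l2) + /2 * ((0 - 2 * l2) * (l3 - 2*l2)^2)))/2
     - (- 7/4 * zeta 3 + zeta 2 * (l3 - l2) - /3 * (l3 - l2)^3)
     - 2 * (zeta 3 - (-/6 * (l2 - l3)^3 - zeta 2 * (l2 - l3) + /2 * ((0 - l3) * (l2 - l3)^2)))
     - 4 * (7/8 * zeta 3 - /2 * zeta 2 * l2 + /6 * l2 ^ 3))).
  { lra. }
  rewrite Hc. field.
Qed.

Lemma P1_ln w : 0 < w -> P 1 w = ln w.
Proof.
  intro Hw. simpl P.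
  replace (INR 1) with 1 by reflexivity.
  rewrite (RInt_ext _ (fun t => / t)).
  2:{ intros x Hx. simpl. field. mm Hx; lra. }
  replace (ln w) with (ln w - ln 1) by (rewrite ln_1; ring).
  apply is_RInt_unique.
  apply (is_RInt_derive (V:=R_CompleteNormedModule) ln (fun t => / t)).
  - intros x Hx. assert (0 < x) by (mm Hx; lra). auto_derive; [lra| field; lra].
  - intros x Hx. assert (0 < x) by (mm Hx; lra).
    apply (ex_derive_continuous (K:=R_AbsRing) (V:=R_NormedModule)). auto_derive. lra.
Qed.

Definition Q2c (v : R) := /2 * ln v ^ 2 + Lc 2 (/ v) - /2 * zeta 2.

Lemma P2_closed v : 1 < v -> P 2 v = Q2c v.
Proof.
  intro Hv. change (P 2 v) with (RInt (fun t => P 1 (t - 1) / t) (INR 2) v).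
  replace (INR 2) with 2 by (simpl; ring).
  rewrite (RInt_ext _ (fun t => ln (t - 1) / t)).
  2:{ intros x Hx. rewrite P1_ln; auto. mm Hx; lra. }
  assert (Q0 : Q2c 2 = 0).
  { unfold Q2c. rewrite (Lc_Li 2 (/2)) by (apply Rabs_le; lra). replace (/2) with (1/2) by field.
      rewrite Li2_half. field. }
  replace (Q2c v) with (Q2c v - Q2c 2) by (rewrite Q0; ring).
  apply is_RInt_unique.
  apply (is_RInt_derive (V:=R_CompleteNormedModule) Q2c (fun t => ln (t - 1) / t)).
  - intros x Hx. assert (1 < x) by (mm Hx; lra).
    assert (d1 : is_derive (fun t => ln t ^ 2) x (2 * ln x / x)).
    { auto_derive. lra. unfold Rdiv. field. lra. }
    assert (d2 : is_derive (fun t => Lc 2 (/ t)) x (Li 1 (/ x) / (/ x) * (- / x ^ 2))).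
    { apply (dLc 1 (fun t => / t)). auto_derive. lra. field. lra.
      rewrite Rabs_pos_eq. rewrite <- Rinv_1. apply Rinv_lt_contravar; lra.
      apply Rlt_le, Rinv_0_lt_compat; lra. apply Rinv_neq_0_compat; lra. }
    assert (d3 : is_derive (fun _ : R => zeta 2) x 0) by (auto_derive; auto).
    unfold Q2c. eapply D_val. dcomb.
    rewrite Li1.
    2:{ rewrite Rabs_pos_eq. rewrite <- Rinv_1. apply Rinv_lt_contravar; lra.
        apply Rlt_le, Rinv_0_lt_compat; lra. }
    replace (1 - / x) with ((x - 1) / x) by (field; lra).
    rewrite ln_div' by lra. field. lra.
  - intros x Hx. assert (1 < x) by (mm Hx; lra).
    apply (ex_derive_continuous (K:=R_AbsRing) (V:=R_NormedModule)). auto_derive. repeat split; lra.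
Qed.

Lemma beta_u w : 3 <= w -> Li 2 (/w) + Li 2 (/(2-w)) - /2 * Li 2 (/(w*(2-w))) + /4 * (ln (w-2) - ln w)^2 = 0.
Proof.
  intro Hw. assert (H0 : 0 <= /w <= 1/3).
  { split. apply Rlt_le, Rinv_0_lt_compat; lra.
    replace (1/3) with (/3) by field. apply Rinv_le_contravar; lra. }
  pose proof (beta_id (/w) H0) as H. unfold betaF in H.
  replace (/ w / (2 * / w - 1)) with (/(2-w)) in H by (field; lra).
  replace ((/ w)^2 / (2 * / w - 1)) with (/(w*(2-w))) in H by (field; lra).
  replace (1 - 2 * / w) with ((w-2)/w) in H by (field; lra).
  rewrite ln_div' in H by lra.
  rewrite !Lc_Li in H. exact H.
  - replace (/ (w * (2 - w))) with (1 / (w * (2 - w))) by (field; lra). apply absdivn_le; nra.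
  - replace (/ (2 - w)) with (1 / (2 - w)) by (field; lra). apply absdivn_le; lra.
  - apply Rabs_le; lra.
Qed.

Lemma L2_u w : 3 < w -> Li 2 (/(w-1)) + Li 2 (/(2-w)) = - /2 * (ln (w-2) - ln (w-1))^2.
Proof.
  intro Hw. assert (H0 : 0 <= /(w-1) <= 1/2).
  { split. apply Rlt_le, Rinv_0_lt_compat; lra.
    replace (1/2) with (/2) by field. apply Rinv_le_contravar; lra. }
  pose proof (L2_Li (/(w-1)) H0) as H.
  replace (/ (w - 1) / (/ (w - 1) - 1)) with (/(2-w)) in H by (field; lra).
  replace (1 - / (w - 1)) with ((w-2)/(w-1)) in H by (field; lra).
  rewrite ln_div' in H by lra. exact H.
Qed.

Definition Rf (w : R) := / 2 * Lc 3 (/ (w * (2 - w))) - Lc 3 (/ w) - Lc 3 (/ (2 - w))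
    + Lc 2 (/ w) * ln (w - 2)
    + / 3 * zeta 3 - / 2 * zeta 2 * ln w
    + / 12 * (ln (w * (w - 2))) ^ 3
    - / 2 * (ln (w - 2)) ^ 2 * ln w.

Lemma Rf_derive w : 3 < w -> is_derive Rf w (Q2c (w - 1) / w).
Proof.
  intro Hw.
  assert (Ba : Rabs (/ w) < 1).
  { rewrite Rabs_pos_eq by (apply Rlt_le, Rinv_0_lt_compat; lra).
    rewrite <- Rinv_1. apply Rinv_lt_contravar; lra. }
  assert (Bb : Rabs (/ (2 - w)) < 1).
  { replace (/ (2 - w)) with (1 / (2 - w)) by (field; lra). apply absdivn; lra. }
  assert (Bc : Rabs (/ (w * (2 - w))) < 1).
  { replace (/ (w * (2 - w))) with (1 / (w * (2 - w))) by (field; lra). apply absdivn; nra. }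
  assert (d1 : is_derive (fun t => Lc 3 (/ (t * (2 - t)))) w
      (Li 2 (/ (w * (2 - w))) / (/ (w * (2 - w))) * ((2*w - 2) / (w * (2 - w))^2))).
  { apply (dLc 2 (fun t => / (t * (2 - t)))); auto. auto_derive; [repeat split; nra | field; lra].
    apply Rinv_neq_0_compat; nra. }
  assert (d2 : is_derive (fun t => Lc 3 (/ t)) w (Li 2 (/ w) / (/ w) * (- / w ^ 2))).
  { apply (dLc 2 (fun t => / t)); auto. auto_derive. lra. field. lra. apply Rinv_neq_0_compat; lra. }
  assert (d3 : is_derive (fun t => Lc 3 (/ (2 - t))) w (Li 2 (/ (2 - w)) / (/ (2 - w)) * (/ (2 - w) ^ 2))).
  { apply (dLc 2 (fun t => / (2 - t))); auto. auto_derive. lra. field. lra. apply Rinv_neq_0_compat; lra. }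
  assert (d4a : is_derive (fun t => Lc 2 (/ t)) w (Li 1 (/ w) / (/ w) * (- / w ^ 2))).
  { apply (dLc 1 (fun t => / t)); auto. auto_derive. lra. field. lra. apply Rinv_neq_0_compat; lra. }
  assert (d4b : is_derive (fun t => ln (t - 2)) w (/ (w - 2))).
  { auto_derive. lra. unfold Rminus. field. lra. }
  pose proof (D_mul _ _ _ _ _ d4a d4b) as d4. cbv beta in d4.
  assert (d5 : is_derive (fun _ : R => zeta 3) w 0) by (auto_derive; auto).
  assert (d6 : is_derive (fun t => ln t) w (/ w)) by (auto_derive; [lra| field; lra]).
  assert (d7 : is_derive (fun t => ln (t * (t - 2)) ^ 3) w (3 * ln (w * (w - 2)) ^ 2 * ((2*w - 2) / (w * (w - 2))))).
  { auto_derive. nra. unfold Rminus, Rdiv. field. lra. }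
  assert (d8 : is_derive (fun t => / 2 * ln (t - 2) ^ 2 * ln t) w (/2 * (2 * ln (w - 2) / (w - 2) * ln w + ln (w - 2) ^ 2 / w))).
  { auto_derive. lra. unfold Rminus, Rdiv. field. lra. }
  unfold Rf. eapply D_val. dcomb.
  unfold Q2c. rewrite (Lc_Li 2 (/w)) by (apply Rlt_le; auto).
  rewrite (Lc_Li 2 (/(w-1))).
  2:{ rewrite Rabs_pos_eq; [|apply Rlt_le, Rinv_0_lt_compat; lra].
      rewrite <- Rinv_1; apply Rlt_le, Rinv_lt_contravar; lra. }
  rewrite Li1 by auto.
  replace (1 - / w) with ((w - 1) / w) by (field; lra). rewrite ln_div' by lra.
  rewrite ln_mult by lra.
  pose proof (beta_u w ltac:(lra)) as E1. pose proof (L2_u w Hw) as E2.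
  replace (Li 2 (/ (w * (2 - w)))) with (2 * (Li 2 (/w) + Li 2 (/(2-w)) + /4 * (ln (w-2) - ln w)^2)) by lra.
  replace (Li 2 (/ (2 - w))) with (- /2 * (ln (w-2) - ln (w-1))^2 - Li 2 (/(w-1))) by lra.
  field. repeat split; lra.
Qed.

Definition fI (t : R) := P 2 (t - 1) / t.

Lemma fI_eq t : 2 < t -> fI t = Q2c (t - 1) / t.
Proof. intro. unfold fI. rewrite P2_closed by lra. reflexivity. Qed.

Lemma fI_cont t : 2 < t -> continuous fI t.
Proof.
  intro Ht.
  apply (continuous_ext_loc (T:=R_UniformSpace) (U:=R_UniformSpace) fI (fun s => Q2c (s - 1) / s) t).
  - assert (He : 0 < t - 2) by lra. exists (mkposreal _ He). intros s Hs.
    unfold ball in Hs; simpl in Hs. unfold AbsRing_ball, abs, minus, plus, opp in Hs; simpl in Hs.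
    apply Rabs_def2 in Hs. symmetry. apply fI_eq. lra.
  - apply (ex_derive_continuous (K:=R_AbsRing) (V:=R_NormedModule)).
    unfold Q2c. auto_derive. repeat split; try lra.
    apply (ex_derive_Lc 1). rewrite Rabs_pos_eq; [|apply Rlt_le, Rinv_0_lt_compat; lra].
    rewrite <- Rinv_1; apply Rinv_lt_contravar; lra.
Qed.

Lemma RInt_der w : 2 < w -> is_derive (fun b => RInt fI 3 b) w (fI w).
Proof.
  intro Hw. apply (is_derive_RInt (V:=R_CompleteNormedModule) fI (fun b => RInt fI 3 b) 3 w).
  - assert (He : 0 < (w - 2) / 2) by lra. exists (mkposreal _ He). intros b Hb.
    unfold ball in Hb; simpl in Hb. unfold AbsRing_ball, abs, minus, plus, opp in Hb; simpl in Hb.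
    apply Rabs_def2 in Hb.
    apply RInt_correct. apply ex_RInt_continuous. intros z Hz. apply fI_cont. mm Hz; lra.
  - apply fI_cont; auto.
Qed.

Lemma Rf_3 : Rf 3 = 0.
Proof.
  unfold Rf.
  replace (/ (3 * (2 - 3))) with (-(1/3)) by field.
  replace (/ (2 - 3)) with (-1) by field.
  replace (3 - 2) with 1 by ring. replace (3 * 1) with 3 by ring.
  rewrite ln_1. rewrite !Lc_Li by (apply Rabs_le; lra).
  replace (/ 3) with (1/3) by field. rewrite Li3_m1.
  pose proof key_identity as K. lra.
Qed.

Definition GI (w : R) := RInt fI 3 w - Rf w.

Theorem theorem4 (u : R) (hu : 3 <= u) :
  P 3 u =
    / 2 * Li 3 (/ (u * (2 - u))) - Li 3 (/ u) - Li 3 (/ (2 - u))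
    + Li 2 (/ u) * ln (u - 2)
    + / 3 * zeta 3 - / 2 * zeta 2 * ln u
    + / 12 * (ln (u * (u - 2))) ^ 3
    - / 2 * (ln (u - 2)) ^ 2 * ln u.
Proof.
  change (P 3 u) with (RInt fI (INR 3) u).
  replace (INR 3) with 3 by (simpl; ring).
  assert (HG : GI u = GI 3).
  { apply const_eq.
    - intros w Hw. assert (Hw' : 3 < w) by (mm Hw; lra).
      unfold GI. eapply D_val.
      apply (D_sub (fun b => RInt fI 3 b) Rf). apply RInt_der; lra. apply Rf_derive; auto.
      rewrite fI_eq by lra. ring.
    - intros w Hw. assert (Hw' : 3 <= w) by (mm Hw; lra).
      unfold GI. apply (C_sub (fun b => RInt fI 3 b) Rf).
      + apply ex_derive_cpt. eexists. apply RInt_der. lra.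
      + unfold Rf. ccomb; repeat split; try nra.
        all: apply (ex_derive_Lc 1); rewrite Rabs_pos_eq by (apply Rlt_le, Rinv_0_lt_compat; lra);
             rewrite <- Rinv_1; apply Rinv_lt_contravar; lra. }
  unfold GI in HG. rewrite RInt_point, Rf_3 in HG.
  replace (RInt fI 3 u) with (Rf u) by (rewrite <- (Rminus_0_r (RInt fI 3 u)); unfold zero in HG; simpl in HG; lra).
  unfold Rf.
  rewrite (Lc_Li 3 (/ (u * (2 - u)))).
  2:{ replace (/ (u * (2 - u))) with (1 / (u * (2 - u))) by (field; lra). apply absdivn_le; nra. }
  rewrite (Lc_Li 3 (/ (2 - u))).
  2:{ replace (/ (2 - u)) with (1 / (2 - u)) by (field; lra). apply absdivn_le; lra. }
  assert (Bu : Rabs (/ u) <= 1).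
  { rewrite Rabs_pos_eq by (apply Rlt_le, Rinv_0_lt_compat; lra).
    rewrite <- Rinv_1; apply Rinv_le_contravar; lra. }
  rewrite (Lc_Li 3 (/ u)) by auto. rewrite (Lc_Li 2 (/ u)) by auto.
  reflexivity.
Qed.
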